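(* Let $C\in\mathbb{R}^{n\times n}$ be symmetric, $\rho>0$, and let $(\tilde\sigma^k,\sigma^k,y^k)$ be generated by the ADMM-BM algorithm described in the context, with Assumption A holding. Then for all $k\ge2$, $L_\rho(\tilde\sigma^k,\sigma^k,y^k)\ge -n\|C\|_\infty$.
   Context: $\langle A,B\rangle=\mathrm{Tr}(A^\top B)$, $\|\cdot\|_F$ Frobenius norm, $\|C\|_\infty=\max_i\sum_j|C_{ij}|$. For $\sigma\in\mathbb{R}^{n\times r}$, $\sigma_i$ is its $i$-th row; $\mathcal{M}=\{\sigma\in\mathbb{R}^{n\times r}:\|\sigma_i\|=1\ \forall i\}$. ADMM-BM with parameter $\rho$: choose $\tilde\sigma^0\in\mathcal{M}$, $\sigma^0=\tilde\sigma^0$, $y^0=C\tilde\sigma^0$. For $k=0,1,\dots$: $\gamma^k=\sigma^k-\frac1\rho(y^k+C\sigma^k)$ with rows $\gamma_i^k$; $\tilde\sigma^{k+1}_i=\gamma_i^k/\|\gamma_i^k\|$; $\sigma^{k+1}=\tilde\sigma^{k+1}+\frac1\rho(y^k-C\tilde\sigma^{k+1})$; $y^{k+1}=y^k+\rho(\tilde\sigma^{k+1}-\sigma^{k+1})$. Assumption A: $\gamma_i^k\neq0$ for all $i,k$. $L_\rho(\tilde\sigma,\sigma,y)=\langle C,\tilde\sigma\sigma^\top\rangle+\langle y,\tilde\sigma-\sigma\rangle+\frac\rho2\|\tilde\sigma-\sigma\|_F^2+\sum_i\mathcal{I}_{\{\|u\|=1\}}(\tilde\sigma_i)$, $\mathcal{I}_S$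 the indicator function of $S$. *)

(* Defs.v *)
From HB Require Import structures.
From mathcomp Require Import all_boot all_order all_algebra.
From mathcomp Require Import reals constructive_ereal.
Set Implicit Arguments. Unset Strict Implicit. Unset Printing Implicit Defensive.
Import Order.TTheory GRing.Theory Num.Theory.
Local Open Scope ring_scope.

Section Defs.
Variable R : realType.

Definition rownorm (n r : nat) (s : 'M[R]_(n, r)) (i : 'I_n) : R :=
  Num.sqrt (\sum_(j < r) s i j ^+ 2).

Definition onM (n r : nat) (s : 'M[R]_(n, r)) : Prop :=
  forall i : 'I_n, rownorm s i = 1.

Definition frob_inner (m p : nat) (A B : 'M[R]_(m, p)) : R := \tr (A^T *m B).

Definition frob_sq (m p : nat) (A : 'M[R]_(m, p)) : R :=
  \sum_(i < m) \sum_(j < p) A i j ^+ 2.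

Definition norm_inf (n : nat) (C : 'M[R]_n) : R :=
  \big[Num.max/0]_(i < n) \sum_(j < n) `|C i j|.

Definition rownormalize (n r : nat) (g : 'M[R]_(n, r)) : 'M[R]_(n, r) :=
  \matrix_(i, j) (g i j / rownorm g i).

Definition admm_gamma (n r : nat) (C : 'M[R]_n) (rho : R)
  (sigma y : 'M[R]_(n, r)) : 'M[R]_(n, r) :=
  sigma - rho^-1 *: (y + C *m sigma).

Definition ADMM_BM (n r : nat) (C : 'M[R]_n) (rho : R)
  (st sigma y : nat -> 'M[R]_(n, r)) : Prop :=
  [/\ onM (st 0%N), sigma 0%N = st 0%N, y 0%N = C *m st 0%N &
   forall k : nat,
     [/\ st k.+1 = rownormalize (admm_gamma C rho (sigma k) (y k)),
         sigma k.+1 = st k.+1 + rho^-1 *: (y k - C *m st k.+1) &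
         y k.+1 = y k + rho *: (st k.+1 - sigma k.+1)]].

Definition assumptionA (n r : nat) (C : 'M[R]_n) (rho : R)
  (sigma y : nat -> 'M[R]_(n, r)) : Prop :=
  forall (k : nat) (i : 'I_n), row i (admm_gamma C rho (sigma k) (y k)) != 0.

Definition ind_sphere (r : nat) (u : 'rV[R]_r) : \bar R :=
  if Num.sqrt (\sum_(j < r) u ord0 j ^+ 2) == 1 then 0%E else (+oo)%E.

Definition L_rho (n r : nat) (C : 'M[R]_n) (rho : R)
  (st sigma y : 'M[R]_(n, r)) : \bar R :=
  ((frob_inner C (st *m sigma^T) + frob_inner y (st - sigma)
    + rho / 2 * frob_sq (st - sigma))%:E
   + \sum_(i < n) ind_sphere (row i st))%E.

End Defs.

(* Main.v *)
Require Import Defs.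
From HB Require Import structures.
From mathcomp Require Import all_boot all_order all_algebra.
From mathcomp Require Import reals constructive_ereal.
From mathcomp Require Import ring lra.
Import Order.TTheory GRing.Theory Num.Theory.
Local Open Scope ring_scope.

Section Aux.
Variable R : realType.

Lemma bigmax_ge (I : eqType) (s : seq I) (F : I -> R) x :
  x \in s -> F x <= \big[Num.max/0]_(i <- s) F i.
Proof.
elim: s => [//|a s IH]; rewrite inE big_cons le_max => /orP [/eqP ->|/IH ->].
  by rewrite lexx.
by rewrite orbT.
Qed.

Lemma rownorm_normalize n r (g : 'M[R]_(n, r)) i :
  row i g != 0 -> rownorm (rownormalize g) i = 1.
Proof.
move=> Hg.
set ss := \sum_(j < r) g i j ^+ 2.
have ss0 : 0 <= ss by apply: sumr_ge0 => j _; apply: sqr_ge0.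
have ssn0 : ss != 0.
  apply/negP => /eqP H; move/negP: Hg; apply; apply/eqP/rowP => j.
  have := @psumr_eq0P _ _ _ _ (fun j _ => sqr_ge0 (g i j)) H j isT.
  by rewrite !mxE => /eqP; rewrite sqrf_eq0 => /eqP.
rewrite /rownorm.
have -> : \sum_(j < r) rownormalize g i j ^+ 2 = ss / (rownorm g i) ^+ 2.
  rewrite /ss big_distrl /=; apply: eq_bigr => j _.
  by rewrite mxE expr_div_n.
by rewrite /rownorm -/ss sqr_sqrtr // mulfV // sqrtr1.
Qed.

Lemma dot_le1 r (a b : 'I_r -> R) :
  \sum_j a j ^+ 2 = 1 -> \sum_j b j ^+ 2 = 1 -> `|\sum_j a j * b j| <= 1.
Proof.
move=> Ha Hb.
apply: (le_trans (ler_norm_sum _ _ _)).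
apply: (@le_trans _ _ (\sum_j (a j ^+ 2 + b j ^+ 2) / 2)).
  apply: ler_sum => j _; rewrite normrM.
  have : 0 <= (`|a j| - `|b j|) ^+ 2 by apply: sqr_ge0.
  rewrite -(real_normK (num_real (a j))) -(real_normK (num_real (b j))).
  move: (`|a j|) (`|b j|) => u v; nra.
rewrite -big_distrl /= big_split /= Ha Hb; lra.
Qed.

Lemma tr_swap m p (A B : 'M[R]_(m, p)) : \tr (A^T *m B) = \tr (A *m B^T).
Proof. by rewrite -mxtrace_tr (trmx_mul A^T B) trmxK mxtrace_mulC. Qed.

End Aux.

Theorem lemma4 (R : realType) (n r : nat) (C : 'M[R]_n) (rho : R)
  (st sigma y : nat -> 'M[R]_(n, r)) :
  C^T = C -> 0 < rho ->
  ADMM_BM C rho st sigma y ->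
  assumptionA C rho sigma y ->
  forall k : nat, (2 <= k)%N ->
    (((- (n%:R * norm_inf C))%:E) <= L_rho C rho (st k) (sigma k) (y k))%E.
Proof.
move=> HC Hrho [_ _ _ Hstep] HA [//|[//|k]] _.
have [Hst Hsig Hy] := Hstep k.+1.
have Hyk : y k.+2 = C *m st k.+2.
  rewrite Hy Hsig opprD addrA subrr add0r scalerN scalerA mulfV ?gt_eqF //.
  by rewrite scale1r opprB addrCA subrr addr0.
have HM : forall i, rownorm (st k.+2) i = 1.
  by move=> i; rewrite Hst; apply: rownorm_normalize; apply: HA.
set S := st k.+2; set G := sigma k.+2.
rewrite /L_rho Hyk.
have -> : \sum_(i < n) ind_sphere (row i S) = 0%E.
  apply: big1 => i _; rewrite /ind_sphere.
  have -> : \sum_(j < r) row i S ord0 j ^+ 2 = \sum_(j < r) S i j ^+ 2.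
    by apply: eq_bigr => j _; rewrite mxE.
  by move: (HM i); rewrite /rownorm => ->; rewrite eqxx.
rewrite adde0 lee_fin.
have -> : frob_inner C (S *m G^T) + frob_inner (C *m S) (S - G) =
          \tr ((C *m S)^T *m S).
  rewrite /frob_inner mulmxBr linearB /= HC mulmxA.
  rewrite (@tr_swap _ _ _ (C *m S) G).
  by rewrite addrCA subrr addr0.
have Hf : 0 <= rho / 2 * frob_sq (S - G).
  apply: mulr_ge0; first by apply: divr_ge0; [exact: ltW|].
  by apply: sumr_ge0 => i _; apply: sumr_ge0 => j _; apply: sqr_ge0.
have Hle : \tr ((C *m S)^T *m S) <= \tr ((C *m S)^T *m S) + rho / 2 * frob_sq (S - G).
  by rewrite lerDl.
apply: le_trans Hle.
have HS1 : forall l, \sum_(i < r) S l i ^+ 2 = 1.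
  move=> l; have ss0 : 0 <= \sum_(i < r) S l i ^+ 2.
    by apply: sumr_ge0 => i _; apply: sqr_ge0.
  by have := sqr_sqrtr ss0; rewrite -/(rownorm S l) HM expr1n => <-.
have -> : \tr ((C *m S)^T *m S) =
    \sum_(l < n) \sum_(j < n) C l j * \sum_(i < r) S j i * S l i.
  rewrite /mxtrace.
  under eq_bigr => i _ do rewrite !mxE.
  under eq_bigr => i _ do under eq_bigr => l _ do rewrite !mxE big_distrl /=.
  rewrite exchange_big /=; apply: eq_bigr => l _.
  rewrite exchange_big /=; apply: eq_bigr => j _.
  by rewrite big_distrr /=; apply: eq_bigr => i _; rewrite mulrA.
have -> : - (n%:R * norm_inf C) = \sum_(l < n) - norm_inf C.
  by rewrite sumr_const card_ord mulr_natl mulNrn.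
apply: ler_sum => l _.
apply: (@le_trans _ _ (- \sum_(j < n) `|C l j|)).
  rewrite lerN2 /norm_inf.
  exact: (@bigmax_ge R _ _ (fun i => \sum_(j < n) `|C i j|) l (mem_index_enum l)).
rewrite -sumrN; apply: ler_sum => j _.
have Hd := @dot_le1 R r _ _ (HS1 j) (HS1 l).
have : `|C l j * \sum_(i < r) S j i * S l i| <= `|C l j|.
  by rewrite normrM ler_piMr.
by rewrite ler_norml => /andP[].
Qed.
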